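(* Let $G$ be a graph and let $xTy$ be a path-thread of $G$ with $x\ne y$. Let $T'$ be the path obtained from $T$ by deleting $x$ and $y$, and suppose $v(T')=3m+2$ for some integer $m\ge1$. Let $G'$ be obtained from $G-V(T')$ by adding a new vertex $z$ and the two new edges $xz$ and $yz$. Then $\lambda(G')\ge v(G')/4$ implies $\lambda(G)\ge v(G)/4$.
   Context: All graphs are finite and simple. $v(G)$ is the number of vertices. $\lambda(G)$ denotes the maximum number of pairwise vertex-disjoint subgraphs of $G$ each of which is a path with exactly two edges. A path-thread of $G$ is a path $P$ in $G$, maximal under inclusion among paths, such that every internal vertex of $P$ has degree $2$ in $G$; its end-vertices are $x,y$, written $xPy$. *)

(* Defs.v *)
(* A finite simple graph is a symmetric irreflexive
   relation e : rel V on a finType V. *)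
From mathcomp Require Import all_boot.
Set Implicit Arguments. Unset Strict Implicit. Unset Printing Implicit Defensive.

Section Graphs.
Variable V : finType.
Variable e : rel V.

Definition deg (v : V) : nat := #|[set w | e v w]|.

Definition is_gpath (p : seq V) : bool :=
  if p is a :: q then path e a q && uniq p else false.

Definition internal (p : seq V) : seq V := drop 1 (take (size p).-1 p).

Definition internal_deg2 (p : seq V) : bool :=
  all (fun v => deg v == 2) (internal p).

Definition pedges (p : seq V) : seq (V * V) := zip p (behead p).

Definition sub_gpath (p q : seq V) : bool :=
  all (fun v => v \in q) p &&
  all (fun ab => ((ab.1, ab.2) \in pedges q) || ((ab.2, ab.1) \in pedges q))
      (pedges p).

(* path-thread: a path whose internal vertices have degree 2 in G, maximal
   under inclusion among such paths *)
Definition is_thread (p : seq V) : Prop :=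
  [/\ is_gpath p, internal_deg2 p &
      forall q, is_gpath q -> internal_deg2 q -> sub_gpath p q -> size q = size p].

Definition P3 (t : V * V * V) : bool :=
  [&& e t.1.1 t.1.2, e t.1.2 t.2 & t.1.1 != t.2].

Definition tverts (t : V * V * V) : seq V := [:: t.1.1; t.1.2; t.2].

Definition packing (P : {set V * V * V}) : bool :=
  [forall t in P, P3 t] &&
  [forall t1 in P, forall t2 in P,
     (t1 != t2) ==> ~~ has (fun v => v \in tverts t2) (tverts t1)].

Definition lam : nat := \max_(P : {set V * V * V} | packing P) #|P|.

End Graphs.

(* G' : from G - V(T') (T' given by the vertex list s) add new vertex z
   (= None) with edges xz, yz *)
Definition cadj (V : finType) (e : rel V) (s : seq V) (x y : V)
  : rel (option {v : V | v \notin s}) :=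
  fun a b => match a, b with
  | Some u, Some w => e (val u) (val w)
  | None, Some w => (val w == x) || (val w == y)
  | Some u, None => (val u == x) || (val u == y)
  | None, None => false
  end.
Arguments cadj [V] e s x y _ _.

(* Main.v *)
Require Import Defs.
From mathcomp Require Import all_boot zify.
Set Implicit Arguments. Unset Strict Implicit. Unset Printing Implicit Defensive.

Definition disj (T : finType) (a b : T*T*T) :=
  ~~ has (fun v => v \in tverts b) (tverts a).

Lemma disjP (T : finType) (a b : T*T*T) :
  reflect (forall v, v \in tverts a -> v \in tverts b -> False) (disj a b).
Proof.
apply: (iffP hasPn) => H v va.
- by move=> vb; move: (H v va); rewrite vb.
- by apply/negP; exact: H.
Qed.

Lemma disj_irr (T:finType) (a : T*T*T) : ~~ disj a a.
Proof. by apply/negP => /disjP H; apply: (H a.1.1); rewrite /tverts inE eqxx. Qed.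

Lemma disj_sym (T:finType) : symmetric (@disj T).
Proof. by move=> a b; apply/disjP/disjP => H v h1 h2; exact: (H v). Qed.

Lemma pairwise_in (T : eqType) (r : rel T) (L : seq T) :
  uniq L -> {in L &, forall a b, a != b -> r a b} -> pairwise r L.
Proof.
elim: L => //= h L IH /andP[hL uL] H; apply/andP; split.
- apply/allP => b bL; apply: H; rewrite ?inE ?eqxx ?bL ?orbT //.
  by apply/eqP => hb; rewrite hb bL in hL.
- by apply: IH => // a b aL bL; apply: H; rewrite inE ?aL ?bL orbT.
Qed.

Lemma in_pairwise (T : eqType) (r : rel T) (L : seq T) :
  symmetric r -> pairwise r L -> {in L &, forall a b, a != b -> r a b}.
Proof.
move=> rs; elim: L => //= h L IH /andP[/allP hL pL] a b.
rewrite !inE => /orP[/eqP->|aL] /orP[/eqP->|bL]; rewrite ?eqxx //.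
- by move=> _; apply: hL.
- by move=> _; rewrite rs; apply: hL.
- exact: IH.
Qed.

Lemma packing_list (T : finType) (e : rel T) (L : seq (T*T*T)) :
  all (P3 e) L -> pairwise (@disj T) L ->
  packing e [set t in L] && (#|[set t in L]| == size L).
Proof.
move=> aP pL.
have uL : uniq L by apply: pairwise_uniq pL => a; apply/negbTE/disj_irr.
rewrite cardsE (card_uniqP uL) eqxx andbT.
apply/andP; split.
- by apply/forallP => t; apply/implyP; rewrite inE; exact: (allP aP).
- apply/forallP => t1; apply/implyP; rewrite inE => t1L.
  apply/forallP => t2; apply/implyP; rewrite inE => t2L.
  by apply/implyP => ne; exact: (in_pairwise (@disj_sym T) pL t1L t2L ne).
Qed.

Lemma packing_pw (T:finType) (e:rel T) (P : {set T*T*T}) :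
  packing e P -> {in P &, forall a b, a != b -> disj a b} /\ {in P, forall t, P3 e t}.
Proof.
case/andP => /forallP H1 /forallP H2; split.
- move=> a b aP bP ne.
  move: (H2 a); rewrite aP /= => /forallP/(_ b); rewrite bP /= => /implyP; exact.
- by move=> t tP; move: (H1 t); rewrite tP.
Qed.

Section Main.
Variables (V : finType) (e : rel V) (x y : V) (s : seq V) (m : nat).
Hypotheses (esym : symmetric e) (xy : x != y) (pth : path e x (rcons s y))
  (up : uniq (x :: rcons s y)) (sz : size s = 3*m+2).

Local Notation W := {v : V | v \notin s}.
Local Notation sn j := (nth x s j).

Lemma xs : x \notin s.
Proof. by move: up; rewrite /= mem_rcons inE negb_or => /andP[/andP[]]. Qed.
Lemma us : uniq s.
Proof. by move: up; rewrite /= rcons_uniq => /andP[_ /andP[]]. Qed.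
Lemma ys : y \notin s.
Proof. by move: up; rewrite /= rcons_uniq => /andP[_ /andP[]]. Qed.

Lemma sn_in j : j < size s -> sn j \in s.
Proof. exact: mem_nth. Qed.

Lemma sn_inj j1 j2 : j1 < size s -> j2 < size s -> sn j1 = sn j2 -> j1 = j2.
Proof. move=> h1 h2 /eqP; rewrite nth_uniq ?us //; exact/eqP. Qed.

Lemma e_x0 : e x (sn 0).
Proof.
move/(pathP x): pth => /(_ 0); rewrite size_rcons /= nth_rcons sz => H.
have := H ltac:(lia); rewrite (_ : 0 < 3*m+2 = true) //; lia.
Qed.

Lemma e_ss j : j.+1 < size s -> e (sn j) (sn j.+1).
Proof.
move=> hj; move/(pathP x): pth => /(_ j.+1); rewrite size_rcons /= !nth_rcons.
by rewrite hj (ltnW hj); apply; lia.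
Qed.

Lemma e_ly : e (sn (3*m+1)) y.
Proof.
move/(pathP x): pth => /(_ (3*m+1).+1); rewrite size_rcons sz => H.
have := H ltac:(lia); rewrite /= !nth_rcons sz.
have h1 : (3*m+1 < 3*m+2) = true by lia.
have h2 : ((3*m+1).+1 < 3*m+2) = false by lia.
have h3 : ((3*m+1).+1 == 3*m+2) = true by lia.
by rewrite h1 h2 h3.
Qed.

Definition hx (b : W) : V := if val b == x then sn 0 else sn (3*m+1).

Definition g (t : option W * option W * option W) : V*V*V :=
  match t with
  | ((Some a, Some b), Some c) => ((val a, val b), val c)
  | ((None, Some b), Some c) => ((hx b, val b), val c)
  | ((Some a, Some b), None) => ((val a, val b), hx b)
  | ((_, None), _) => ((x, sn 0), sn 1)
  | ((None, Some _), None) => ((x,x),x)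
  end.

Variable P' : {set option W * option W * option W}.
Hypothesis pP : packing (cadj e s x y) P'.

Definition hasMid := [exists t in P', t.1.2 == None].
Definition hasX := [exists t in P', ((t.1.1 == None) || (t.2 == None))
   && (omap val t.1.2 == Some x)].
Definition k := if hasMid then 2 else if hasX then 1 else 0.

Lemma noneU t1 t2 : t1 \in P' -> t2 \in P' -> None \in tverts t1 ->
  None \in tverts t2 -> t1 = t2.
Proof.
move=> h1 h2 n1 n2; apply/eqP; apply/negPn/negP => ne.
by move: ((packing_pw pP).1 _ _ h1 h2 ne) => /disjP /(_ None n1 n2).
Qed.

Lemma kval t : t \in P' -> None \in tverts t ->
  k = if t.1.2 == None then 2 else if omap val t.1.2 == Some x then 1 else 0.
Proof.
move=> tP nt; rewrite /k.
case: (boolP (t.1.2 == None)) => hm.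
  by have -> : hasMid by apply/existsP; exists t; rewrite tP hm.
have -> : hasMid = false.
  apply/negbTE/existsP => -[t' /andP[t'P /eqP mid]].
  have := noneU t'P tP _ nt; rewrite /tverts mid !inE eqxx orbT => /(_ isT) ht.
  by rewrite -ht mid eqxx in hm.
have -> : hasX = (omap val t.1.2 == Some x).
  apply/existsP/idP.
  - case=> t' /andP[t'P /andP[en om]].
    have <- // := noneU t'P tP _ nt.
    by move: en; rewrite /tverts !inE => /orP[] /eqP ->; rewrite eqxx ?orbT ?orTb.
  - move=> om; exists t; rewrite tP om andbT.
    move: nt hm; rewrite /tverts !inE.
    by case/orP=> [/eqP <-|/orP[/eqP <-|/eqP <-]]; rewrite ?eqxx ?orbT ?orTb.
by [].
Qed.

Lemma k_le2 : k <= 2.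
Proof. by rewrite /k; case: hasMid; case: hasX. Qed.

Definition Qv (t : option W * option W * option W) (v : V) :=
  (exists2 w : W, Some w \in tverts t & val w = v) \/
  (None \in tverts t /\ exists2 j, ((j < k) || (k + 3*m <= j)) && (j < size s) & v = sn j).

Lemma Qv_hx t b : t \in P' -> None \in tverts t -> t.1.2 = Some b ->
  (val b == x) || (val b == y) -> Qv t (hx b).
Proof.
move=> tP nt mb bxy; right; split => //.
rewrite (kval tP nt) mb /= /hx.
have -> : (Some (sval b) == Some x) = (sval b == x) by [].
case: (eqVneq (sval b) x) => bx /=.
  by exists 0 => //; rewrite sz; lia.
by exists (3*m+1) => //; rewrite sz; lia.
Qed.

Lemma hx_in b : hx b \in s.
Proof. by rewrite /hx; case: ifP => _; apply: sn_in; rewrite sz; lia. Qed.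

Lemma e_hx b : (sval b == x) || (sval b == y) -> e (sval b) (hx b).
Proof.
rewrite /hx; case: (eqVneq (sval b) x) => [-> _|bx /= /eqP ->].
  exact: e_x0.
by rewrite esym; exact: e_ly.
Qed.

Lemma keyl t : t \in P' -> P3 (cadj e s x y) t ->
  P3 e (g t) /\ forall v, v \in tverts (g t) -> Qv t v.
Proof.
move=> tP; case: t tP => [[[a|] [b|]] [c|]] tP; rewrite /P3 /cadj /=;
  rewrite ?andbF //.
- move=> /and3P[h1 h2 h3]; split.
    apply/and3P; split => //.
  move=> v; rewrite /tverts !inE => /or3P[] /eqP ->; left;
   [exists a | exists b | exists c]; rewrite // /tverts !inE eqxx ?orbT ?orTb //.
- move=> /and3P[h1 hb _]; split.
    apply/and3P; split => //; first exact: e_hx.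
    by apply/eqP => E; have := valP a; rewrite /= E hx_in.
  move=> v; rewrite /tverts !inE => /or3P[] /eqP ->.
  + by left; exists a; rewrite // /tverts !inE eqxx ?orbT ?orTb.
  + by left; exists b; rewrite // /tverts !inE eqxx ?orbT ?orTb.
  + apply: Qv_hx => //; by rewrite /tverts !inE eqxx ?orbT ?orTb.
- move=> /and3P[ha hc ac].
  have nin : None \in tverts (Some a, None, Some c).
    by rewrite /tverts !inE eqxx ?orbT ?orTb.
  split.
    apply/and3P; split; first exact: e_x0.
      by apply: e_ss; rewrite sz; lia.
    by apply/eqP => E; move: xs; rewrite E sn_in // sz; lia.
  move=> v; rewrite /tverts !inE => /or3P[] /eqP ->.
  + left; case: (eqVneq (sval a) x) => ax.
      by exists a; rewrite // /tverts !inE eqxx ?orbT ?orTb.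
    exists c; first by rewrite /tverts !inE eqxx ?orbT ?orTb.
    move: hc => /orP[/eqP//|/eqP cy]; exfalso.
    move: ha; rewrite (negbTE ax) /= => /eqP ay.
    have ac' : a = c by apply: val_inj; rewrite /= ay cy.
    by move: ac; rewrite ac' eqxx.
  + right; split => //; exists 0; rewrite // (kval tP nin) /= sz; lia.
  + right; split => //; exists 1; rewrite // (kval tP nin) /= sz; lia.
- move=> /and3P[hb h2 _]; split.
    apply/and3P; split => //; first by rewrite esym; exact: e_hx.
    by apply/eqP => E; have := valP c; rewrite /= -E hx_in.
  move=> v; rewrite /tverts !inE => /or3P[] /eqP ->.
  + apply: Qv_hx => //; by rewrite /tverts !inE eqxx ?orbT ?orTb.
  + by left; exists b; rewrite // /tverts !inE eqxx ?orbT ?orTb.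
  + by left; exists c; rewrite // /tverts !inE eqxx ?orbT ?orTb.
Qed.

Definition chunk (i : nat) : V*V*V :=
  ((sn (k + 3*i), sn (k+3*i).+1), sn (k+3*i).+2).
Definition L := map g (enum P') ++ map chunk (iota 0 m).

Lemma chunk_mem i v : i < m -> v \in tverts (chunk i) ->
  exists2 j, (k + 3*i <= j < k + 3*i + 3) && (j < size s) & v = sn j.
Proof.
move=> im; have := k_le2; rewrite /tverts /chunk !inE => kl /or3P[]/eqP ->;
  [exists (k+3*i) | exists (k+3*i).+1 | exists (k+3*i).+2] => //; rewrite sz; lia.
Qed.

Lemma P3'_of t : t \in P' -> P3 (cadj e s x y) t.
Proof. exact: (packing_pw pP).2. Qed.

Lemma L_P3 : all (P3 e) L.
Proof.
rewrite all_cat; apply/andP; split.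
- rewrite all_map; apply/allP => t; rewrite mem_enum => tP /=.
  exact: (keyl tP (P3'_of tP)).1.
- rewrite all_map; apply/allP => i; rewrite mem_iota => /andP[_ im] /=.
  have kl := k_le2.
  have h0 : (k+3*i) < size s by rewrite sz; lia.
  have h1 : (k+3*i).+1 < size s by rewrite sz; lia.
  have h2 : (k+3*i).+2 < size s by rewrite sz; lia.
  rewrite /P3 /chunk /=; apply/and3P; split; [exact: e_ss | exact: e_ss |].
  by apply/eqP => /(sn_inj h0 h2); lia.
Qed.

Lemma L_pw : pairwise (@disj V) L.
Proof.
have kl := k_le2.
rewrite pairwise_cat; apply/and3P; split.
- apply/allrelP => a b.
  case/mapP => t; rewrite mem_enum => tP ->.
  case/mapP => i; rewrite mem_iota => /andP[_ im] ->.
  apply/disjP => v vg vc.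
  have [_ Q] := keyl tP (P3'_of tP).
  case: (chunk_mem im vc) => j' /andP[jr js'] vj'.
  case: (Q v vg) => [[w _ wv]|[_ [j /andP[jk js] vj]]].
  + by have := valP w; rewrite /= wv vj' (sn_in js').
  + rewrite vj in vj'; have E := sn_inj js js' vj'; lia.
- rewrite pairwise_map; apply: pairwise_in; first exact: enum_uniq.
  move=> a b; rewrite !mem_enum => aP bP ne /=.
  have D := (packing_pw pP).1 _ _ aP bP ne.
  apply/disjP => v va vb.
  have [_ Qa] := keyl aP (P3'_of aP).
  have [_ Qb] := keyl bP (P3'_of bP).
  case: (Qa v va) => [[w1 w1a wv1]|[na [j1 /andP[_ js1] vj1]]];
  case: (Qb v vb) => [[w2 w2b wv2]|[nb [j2 /andP[_ js2] vj2]]].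
  + have ew : w1 = w2 by apply: val_inj; rewrite wv1 wv2.
    by rewrite ew in w1a; move/disjP: D => /(_ _ w1a w2b).
  + by have := valP w1; rewrite /= wv1 vj2 (sn_in js2).
  + by have := valP w2; rewrite /= wv2 vj1 (sn_in js1).
  + by move/disjP: D => /(_ _ na nb).
- rewrite pairwise_map; apply: pairwise_in; first exact: iota_uniq.
  move=> i j; rewrite !mem_iota => /andP[_ im] /andP[_ jm] ne /=.
  apply/disjP => v vi vj.
  case: (chunk_mem im vi) => j1 /andP[r1 s1] v1.
  case: (chunk_mem jm vj) => j2 /andP[r2 s2] v2.
  rewrite v1 in v2; have E := sn_inj s1 s2 v2; lia.
Qed.

Lemma lam_ge : #|P'| + m <= lam e.
Proof.
have /andP[pk /eqP cs] := packing_list L_P3 L_pw.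
have -> : #|P'| + m = size L.
  by rewrite /L size_cat !size_map size_iota cardE.
rewrite -cs /lam; exact: (leq_bigmax_cond [set t in L] pk).
Qed.

End Main.

Theorem lemma3p2 (V : finType) (e : rel V) (esym : symmetric e)
  (eirr : irreflexive e) (x y : V) (s : seq V) (m : nat) :
  x != y ->
  is_thread e (x :: rcons s y) ->
  1 <= m ->
  size s = 3 * m + 2 ->
  #|{: option ({v : V | v \notin s})}| <= 4 * lam (cadj e s x y) ->
  #|V| <= 4 * lam e.
Proof.
move=> xy [gp _ _] m1 sz H.
case/andP: gp => pth up.
have P0 : packing (cadj e s x y) set0.
  by apply/andP; split; apply/forallP => t; rewrite inE.
set P' := [arg max_(P > set0 | packing (cadj e s x y) P) #|P|].
have pP' : packing (cadj e s x y) P' by rewrite /P'; case: arg_maxnP.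
have Elam : lam (cadj e s x y) = #|P'| by rewrite /lam (bigmax_eq_arg set0 P0).
have G := lam_ge esym xy pth up sz pP'.
have us : uniq s by move: up; rewrite /= rcons_uniq => /andP[_ /andP[]].
have C : #|[pred v | v \notin s]| + size s = #|V|.
  rewrite -(card_uniqP us) addnC -(cardC (mem s)); congr (_ + _).
move: H; rewrite card_option card_sig Elam.
move=> h; rewrite -C sz; move: h G; set c := #|_|; set q := #|P'|; lia.
Qed.
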